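(* For every pair of integers $r$ and $k$ with $r\ge 2$, $k$ positive, $r+k\equiv 1\pmod 2$ and $k\le r$, there exist infinitely many triples $(G,P,d)$ such that (1) $G$ is a graph with $\chi(G)\le r$, (2) $P\subset V(G)$ and $|\mathcal{D}_G(P,2)|=3(r+k-1)$, (3) $d\colon P\to[r+k]$ is a precoloring of $P$ in $G$, and (4) $d$ cannot be extended to a $\frac{3r+k+1}{2}$-coloring of $G$.
   Context: For a graph $G$, $P\subset V(G)$ and a positive integer $k$, $\mathcal{D}_G(P,k)=\{\{x,y\}\subset P: x\ne y,\ d_G(x,y)\le k\}$, where $d_G$ is the distance in $G$. $[m]=\{1,\dots,m\}$. A precoloring of $P$ in $G$ is a proper coloring of $G[P]$; an $m$-coloring of $G$ is a proper coloring using at most $m$ colors; $d$ is extended by a coloring $f$ of $G$ if $f(v)=d(v)$ for all $v\in P$. *)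

(* Defs.v *)
From mathcomp Require Import all_boot.
Set Implicit Arguments. Unset Strict Implicit. Unset Printing Implicit Defensive.

Definition simple_graph (T : finType) (e : rel T) : Prop :=
  symmetric e /\ irreflexive e.

(* ball e k x = { y : d_G(x,y) <= k }: vertices reachable from x by a walk of
   length at most k (computed by k rounds of neighbourhood expansion). *)
Definition ball (T : finType) (e : rel T) (k : nat) (x : T) : {set T} :=
  iter k (fun S : {set T} => S :|: [set y | [exists z in S, e z y]]) [set x].

Definition dist_le (T : finType) (e : rel T) (k : nat) (x y : T) : bool :=
  y \in ball e k x.

Definition DG (T : finType) (e : rel T) (P : {set T}) (k : nat) : {set {set T}} :=
  [set s : {set T} | (s \subset P) && (#|s| == 2) &&
     [exists x, exists y, (s == [set x; y]) && (x != y) &&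
        dist_le e k x y]].

Definition proper_coloring (T : finType) (e : rel T) (m : nat) (f : T -> 'I_m) : Prop :=
  forall x y, e x y -> f x != f y.

Definition chi_le (T : finType) (e : rel T) (r : nat) : Prop :=
  exists f : T -> 'I_r, proper_coloring e f.

Definition precoloring (T : finType) (e : rel T) (P : {set T}) (c : nat) (d : T -> 'I_c) : Prop :=
  forall x y, x \in P -> y \in P -> e x y -> d x != d y.

Definition extendable (T : finType) (e : rel T) (P : {set T}) (c : nat) (d : T -> 'I_c) (m : nat) : Prop :=
  exists f : T -> 'I_m, proper_coloring e f /\
    forall v, v \in P -> nat_of_ord (f v) = nat_of_ord (d v).

(* Main.v *)
From HB Require Import structures.
Require Import Defs.
From mathcomp Require Import all_boot zify.
Set Implicit Arguments. Unset Strict Implicit. Unset Printing Implicit Defensive.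
Lemma ball2 (T : finType) (e : rel T) x y :
  dist_le e 2 x y = [|| y == x, e x y | [exists z, e x z && e z y]].
Proof.
rewrite /dist_le /ball /= !inE.
apply/idP/idP.
- case/orP=> [/orP[->//|]|].
    by case/existsP=> z; rewrite !inE => /andP[/eqP-> ->]; rewrite orbT.
  case/existsP=> z /andP[]; rewrite !inE => /orP[/eqP->|]; first by move=> ->; rewrite orbT.
  case/existsP=> w; rewrite !inE => /andP[/eqP-> h1 h2].
  by apply/orP; right; apply/orP; right; apply/existsP; exists z; rewrite h1 h2.
- case/or3P=> [->//|h|/existsP[z /andP[h1 h2]]].
    apply/orP; left; apply/orP; right; apply/existsP; exists x; by rewrite !inE eqxx h.
  apply/orP; right; apply/existsP; exists z; rewrite !inE h2 andbT.
  apply/orP; right; apply/existsP; exists x; by rewrite !inE eqxx h1.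
Qed.

Lemma transfer (T : finType) (e : rel T) (P : {set T}) c (d : T -> 'I_c) r D m M :
  M <= #|T| -> simple_graph e -> chi_le e r -> #|DG e P 2| = D ->
  precoloring e P d -> ~ extendable e P d m ->
  exists n (e' : rel 'I_n) (P' : {set 'I_n}) (d' : 'I_n -> 'I_c),
    M <= n /\ simple_graph e' /\ chi_le e' r /\ #|DG e' P' 2| = D /\
    precoloring e' P' d' /\ ~ extendable e' P' d' m.
Proof.
move=> HM [Hsym Hirr] [f Hf] HD Hpre Hext.
pose ev : 'I_#|T| -> T := enum_val.
pose rk : T -> 'I_#|T| := enum_rank.
have evK : cancel ev rk by exact: enum_valK.
have rkK : cancel rk ev by exact: enum_rankK.
have evI : injective ev by exact: can_inj evK.
have rkI : injective rk by exact: can_inj rkK.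
pose e' := [rel i j | e (ev i) (ev j)].
pose P' := ev @^-1: P.
exists #|T|, e', P', (d \o ev).
have Hdist : forall i j, dist_le e' 2 i j = dist_le e 2 (ev i) (ev j).
  move=> i j; rewrite !ball2 /= (inj_eq evI); congr [|| _, _ | _].
  apply/existsP/existsP=> [[z Hz]|[z Hz]]; first by exists (ev z).
  by exists (rk z); rewrite rkK.
split=> //; split.
  by split; [move=> i j /= ; apply: Hsym | move=> i /=; apply: Hirr].
split; first by exists (f \o ev) => i j /= /Hf.
split.
  rewrite -HD.
  have -> : DG e' P' 2 = [set [set rk x | x in s] | s : {set T} in DG e P 2].
    apply/setP=> s.
    have Es : s = rk @: (ev @: s).
      by rewrite -imset_comp (eq_imset (g:=id)) ?imset_id // => x /=; rewrite evK.
    rewrite [in RHS]Es (mem_imset _ _ (imset_inj rkI)) !inE.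
    rewrite sub_imset_pre (card_imset _ evI).
    congr (_ && _).
    apply/existsP/existsP=> [[x /existsP[y /andP[/andP[/eqP Hs Hxy] Hd]]]|
                           [x /existsP[y /andP[/andP[/eqP Hs Hxy] Hd]]]].
      exists (ev x); apply/existsP; exists (ev y).
      by rewrite Hs imsetU1 imset_set1 eqxx (inj_eq evI) Hxy -Hdist.
    exists (rk x); apply/existsP; exists (rk y).
    rewrite Es Hs imsetU1 imset_set1 eqxx (inj_eq rkI) Hxy /=.
    by rewrite Hdist !rkK.
  by rewrite card_imset //; exact: imset_inj rkI.
split; first by move=> i j; rewrite !inE => Hi Hj /= /Hpre; apply.
move=> [g [Hg Hgd]]; apply: Hext; exists (g \o rk); split.
  by move=> x y Hxy /=; apply: Hg; rewrite /= !rkK.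
by move=> v Hv /=; rewrite Hgd ?inE /= rkK.
Qed.
Lemma sum_disj (I T : finType) (S : I -> {set T}) (A : {set T}) :
  (forall i j x, x \in S i -> x \in S j -> i = j) -> (forall i, S i \subset A) ->
  \sum_i #|S i| <= #|A|.
Proof.
move=> Hd HA.
have E1 : forall i, #|S i| = \sum_(x in A) (x \in S i).
  move=> i; rewrite -big_mkcondr /= -sum1_card; apply: eq_bigl => x /=.
  case: (boolP (x \in S i)) => Hx; last by rewrite andbF.
  by rewrite (subsetP (HA i) _ Hx).
rewrite (eq_bigr _ (fun i _ => E1 i)) exchange_big /= -sum1_card.
apply: leq_sum => x _.
case: (pickP (fun i => x \in S i)) => [i0 Hi0|H0].
  rewrite (bigD1 i0) //= Hi0 big1 // => j Hj.
  by case: (boolP (x \in S j)) => // Hx; move: Hj; rewrite (Hd _ _ _ Hx Hi0) eqxx.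
by rewrite big1 // => i _; rewrite H0.
Qed.

Lemma card_ge m k : k <= m -> #|[set c : 'I_m | k <= c]| <= m - k.
Proof.
move=> Hk.
have H1 : #|[set c : 'I_m | k <= c]| + #|[set c : 'I_m | c < k]| = m.
  rewrite -[m in RHS](card_ord m) -(cardsC [set c : 'I_m | k <= c]); congr (_ + _).
  by apply: eq_card => c; rewrite !inE -ltnNge.
have H3 : #|[set widen_ord Hk i | i in 'I_k]| = k.
  by rewrite card_imset ?card_ord // => i j /(congr1 val) /= /val_inj.
have H2 : k <= #|[set c : 'I_m | c < k]|.
  rewrite -{1}H3; apply: subset_leq_card; apply/subsetP=> c /imsetP[i _ ->].
  by rewrite inE /= (ltn_ord i).
lia.
Qed.
Inductive V (a b N : nat) : Type :=
| Pin of 'I_3 | Zv | Tv of 'I_3 | Yv of 'I_a.+1 & 'I_b.+1 | Pv of 'I_b | Iso of 'I_N.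

Section V.
Variables a b N : nat.
Local Notation V := (V a b N).
Definition encV (v : V) : 'I_3 + (unit + ('I_3 + (('I_a.+1 * 'I_b.+1) + ('I_b + 'I_N)))) :=
  match v with
  | Pin i => inl i | Zv => inr (inl tt) | Tv i => inr (inr (inl i))
  | Yv s j => inr (inr (inr (inl (s, j)))) | Pv l => inr (inr (inr (inr (inl l))))
  | Iso i => inr (inr (inr (inr (inr i)))) end.
Definition decV (x : 'I_3 + (unit + ('I_3 + (('I_a.+1 * 'I_b.+1) + ('I_b + 'I_N))))) : V :=
  match x with
  | inl i => Pin _ _ _ i | inr (inl _) => Zv _ _ _ | inr (inr (inl i)) => Tv _ _ _ i
  | inr (inr (inr (inl (s, j)))) => Yv _ s j | inr (inr (inr (inr (inl l)))) => Pv _ _ l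
  | inr (inr (inr (inr (inr i)))) => Iso _ _ i end.
Lemma encVK : cancel encV decV. Proof. by case. Qed.
End V.

HB.instance Definition _ a b N := Finite.copy (V a b N) (can_type (@encVK a b N)).

Section Core.
Variables a b N : nat.
Local Notation V := (V a b N).

Definition E (u v : V) : bool :=
  match u, v with
  | Pin _, Yv _ _ | Yv _ _, Pin _ => true
  | Zv, Yv _ _ | Yv _ _, Zv => true
  | Zv, Tv _ | Tv _, Zv => true
  | Yv s _, Yv s' _ => s != s'
  | Yv _ j, Pv l | Pv l, Yv _ j => (j : nat) == l.+1
  | _, _ => false end.

Lemma E_sym : symmetric E.
Proof. by case=> [?||?|? ?|?|?] [?||?|? ?|?|?] //=; rewrite eq_sym. Qed.
Lemma E_irr : irreflexive E.
Proof. by case=> * //=; rewrite eqxx. Qed.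

Definition isP (v : V) : bool :=
  match v with Pin _ | Tv _ | Pv _ => true | _ => false end.
Definition Pset : {set V} := [set v | isP v].

Lemma card_V : N <= #|{: V}|.
Proof.
have H : #|[set Iso a b i | i : 'I_N]| = N by rewrite card_imset ?card_ord // => i j [].
by rewrite -{1}H -cardsT; apply: subset_leq_card; apply: subsetT.
Qed.

Definition colr (v : V) : nat := match v with Tv _ => 1 | Yv s _ => (s : nat).+1 | _ => 0 end.
Lemma colr_lt v : colr v < a.+2.
Proof. by case: v => //= s _; rewrite ltnS. Qed.
Lemma colr_ok u v : E u v -> colr u != colr v.
Proof.
by case: u => [?||?|s ?|?|?]; case: v => [?||?|s' ?|?|?] //=; rewrite eqSS.
Qed.
Lemma chiV : chi_le E a.+2.
Proof.
exists (fun v => Ordinal (colr_lt v)) => u v /colr_ok H.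
by apply/negP=> /eqP/(congr1 val) /= /eqP; rewrite (negbTE H).
Qed.

Local Notation pin := (@Pin a b N).
Local Notation tv := (@Tv a b N).
Local Notation pv := (@Pv a b N).

Definition closeP (u v : V) : bool :=
  match u, v with | Pin _, Pin _ | Tv _, Tv _ | Pin _, Pv _ | Pv _, Pin _ => true | _, _ => false end.

Lemma closeV u v : isP u -> isP v -> u != v -> dist_le E 2 u v = closeP u v.
Proof.
move=> Pu Pv Huv; rewrite ball2 eq_sym (negbTE Huv) /=.
have -> : E u v = false by case: u Pu Huv => [?||?|? ?|?|?]; case: v Pv => [?||?|? ?|?|?].
case: u Pu Huv => [i||i|? ?|l|?] //; case: v Pv => [i'||i'|? ?|l'|?] //= _ _ H;
  try (by apply/existsP; exists (@Yv a b N ord0 ord0));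
  try (by apply/existsP; exists (@Zv a b N));
  try (by apply/existsP; exists (@Yv a b N ord0 (Ordinal (ltn_ord l : l.+1 < b.+1))); rewrite /= eqxx);
  try (by apply/existsP; exists (@Yv a b N ord0 (Ordinal (ltn_ord l' : l'.+1 < b.+1))); rewrite /= eqxx);
  apply/negbTE/existsPn => -[?||?|? ?|?|?] //=; rewrite ?andbF //.
apply/negP => /andP[/eqP E1 /eqP E2].
have E3 : l = l' by apply/val_inj/eqP; rewrite -eqSS -E1 -E2.
by move: H; rewrite E3 eqxx.
Qed.

Lemma inDG2 x y : isP x -> isP y -> x != y -> closeP x y -> [set x; y] \in DG E Pset 2.
Proof.
move=> Px Py Hxy Hc; rewrite /DG inE cards2 Hxy eqxx andbT; apply/andP; split.
  by apply/subsetP=> z; rewrite !inE => /orP[] /eqP ->.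
apply/existsP; exists x; apply/existsP; exists y; by rewrite eqxx Hxy closeV.
Qed.

Lemma DG_inv s : s \in DG E Pset 2 ->
  exists x y, [/\ s = [set x; y], x != y, isP x, isP y & closeP x y].
Proof.
rewrite !inE => /andP[/andP[Hsub _] /existsP[x /existsP[y /andP[/andP[/eqP Hs Hxy] Hd]]]].
have Px : isP x by move/subsetP: Hsub => /(_ x); rewrite Hs !inE eqxx => /(_ isT).
have Py : isP y by move/subsetP: Hsub => /(_ y); rewrite Hs !inE eqxx orbT => /(_ isT).
by exists x, y; split => //; rewrite -closeV.
Qed.

Definition Aset : {set {set V}} := [set [set pin x | x in s] | s : {set 'I_3} in [set s : {set 'I_3} | #|s| == 2]].
Definition Bset : {set {set V}} := [set [set tv x | x in s] | s : {set 'I_3} in [set s : {set 'I_3} | #|s| == 2]].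
Definition Cset : {set {set V}} := [set [set pin x.1; pv x.2] | x : 'I_3 * 'I_b].

Lemma DG_eq : DG E Pset 2 = Aset :|: Bset :|: Cset.
Proof.
apply/setP=> s; apply/idP/idP.
  case/DG_inv=> x [y [-> Hxy Px Py]].
  case: x Px Hxy => [i||i|? ?|l|?] //; case: y Py => [i'||i'|? ?|l'|?] // _ _ Hxy _; rewrite !inE.
  - apply/orP; left; apply/orP; left; apply/imsetP; exists [set i; i'].
      have Hii : i != i' by apply: contraNneq Hxy => ->.
      by rewrite inE cards2 Hii.
    by rewrite imsetU1 imset_set1.
  - apply/orP; right; apply/imsetP; by exists (i, l').
  - apply/orP; left; apply/orP; right; apply/imsetP; exists [set i; i'].
      have Hii : i != i' by apply: contraNneq Hxy => ->.
      by rewrite inE cards2 Hii.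
    by rewrite imsetU1 imset_set1.
  - apply/orP; right; apply/imsetP; exists (i', l) => //=; exact: setUC.
rewrite !in_setU => /orP[/orP[]|].
- case/imsetP=> s0; rewrite inE => /cards2P [i [j [Hij ->]]] ->.
  rewrite imsetU1 imset_set1; apply: inDG2 => //; apply: contra Hij => /eqP [] ->//.
- case/imsetP=> s0; rewrite inE => /cards2P [i [j [Hij ->]]] ->.
  rewrite imsetU1 imset_set1; apply: inDG2 => //; apply: contra Hij => /eqP [] ->//.
- by case/imsetP=> [[i l]] _ ->; apply: inDG2.
Qed.

Lemma card_DG : #|DG E Pset 2| = 3 * b.+2.
Proof.
have pinI : injective pin by move=> ? ? [].
have tvI : injective tv by move=> ? ? [].
have H3 : #|[set s : {set 'I_3} | #|s| == 2]| = 3 by rewrite card_draws card_ord.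
have cA : #|Aset| = 3.
  by rewrite (card_imset _ (imset_inj pinI)).
have cB : #|Bset| = 3.
  by rewrite (card_imset _ (imset_inj tvI)).
have cC : #|Cset| = 3 * b.
  rewrite card_imset ?card_prod ?card_ord // => [[i l]] [i' l'] /= H.
  have : pin i \in [set pin i'; pv l'] by rewrite -H !inE eqxx.
  rewrite !inE => /orP[/eqP[] -> |/eqP//].
  have : pv l \in [set pin i'; pv l'] by rewrite -H !inE eqxx orbT.
  by rewrite !inE => /orP[/eqP//|/eqP[] ->].
have dAB : Aset :&: Bset = set0.
  apply/setP=> s; rewrite !inE; apply/negbTE/negP => /andP[].
  case/imsetP=> s0; rewrite inE => /cards2P [i [j [_ ->]]] ->.
  case/imsetP=> s1 _ /setP /(_ (pin i)).
  by rewrite (mem_imset _ _ pinI) !inE eqxx /= => /esym/imsetP [? _ []].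
have dABC : (Aset :|: Bset) :&: Cset = set0.
  apply/setP=> s; rewrite !inE; apply/negbTE/negP => /andP[H].
  case/imsetP=> [[i l]] _ Hs; move: H; rewrite Hs => /orP[]; case/imsetP=> s0 _
    /setP /(_ (pv l)); rewrite !inE eqxx orbT => /esym/imsetP [? _ H0]; discriminate H0.
rewrite DG_eq cardsU dABC cards0 subn0 cardsU dAB cards0 subn0 cA cB cC.
by rewrite mulnS mulnS addnA.
Qed.

Definition dval (v : V) : nat :=
  match v with Pin i => i | Tv i => i | Pv l => (l : nat) + 3 | _ => 0 end.
Lemma dval_lt v : dval v < b.+3.
Proof. case: v => //= [i|i|l]; [have:= ltn_ord i | have := ltn_ord i | have := ltn_ord l]; lia. Qed.
Definition dV (v : V) : 'I_(b.+3) := Ordinal (dval_lt v).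

Lemma preV : precoloring E Pset dV.
Proof.
move=> x y; rewrite !inE.
by case: x => [?||?|? ?|?|?]; case: y => [?||?|? ?|?|?].
Qed.

Local Notation yv := (@Yv a b N).
Local Notation zv := (@Zv a b N).
Lemma no_ext m : b.+3 <= m -> 2 * m < 2 * a + b + 9 -> ~ extendable E Pset dV m.
Proof.
move=> Hbm Hm [g [Hg Hgd]].
have hp i : (g (pin i) : nat) = i by rewrite Hgd // inE.
have ht i : (g (tv i) : nat) = i by rewrite Hgd // inE.
have hpv l : (g (pv l) : nat) = l + 3 by rewrite Hgd // inE.
have neq u v : E u v -> (g u : nat) != g v.
  by move=> /Hg; apply: contra => /eqP /val_inj ->.
have hz : 3 <= g zv.
  rewrite leqNgt; apply/negP => H.
  by move: (neq zv (tv (Ordinal H)) isT); rewrite ht eqxx.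
have hy s j : 3 <= g (yv s j).
  rewrite leqNgt; apply/negP => H.
  by move: (neq (pin (Ordinal H)) (yv s j) isT); rewrite hp eqxx.
have hyz s j : g (yv s j) != g zv.
  by apply/negP => /eqP E1; move: (neq zv (yv s j) isT); rewrite E1 eqxx.
pose S s := [set g (yv s j) | j in 'I_b.+1].
pose R := [set c : 'I_m | 3 <= c] :\ g zv.
pose W := [set c : 'I_m | b.+3 <= c].
have Sd : forall s s' c, c \in S s -> c \in S s' -> s = s'.
  move=> s s' c /imsetP[j _ ->] /imsetP[j' _ E1].
  apply/eqP; apply: contraT => Hss.
  by move: (neq (yv s j) (yv s' j') Hss); rewrite E1 eqxx.
have Sd' : forall s s' c, c \in S s :&: W -> c \in S s' :&: W -> s = s'.
  by move=> s s' c /setIP[H1 _] /setIP[H2 _]; apply: Sd H1 H2.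
have SR : forall s, S s \subset R.
  by move=> s; apply/subsetP=> c /imsetP[j _ ->]; rewrite !inE hyz hy.
have S1 := sum_disj Sd SR.
have S2 := sum_disj Sd' (fun s => subsetIr (S s) W).
have hR : #|R| <= m - 4.
  have := card_ge (leq_trans (isT : 3 <= b.+3) Hbm).
  by rewrite (cardsD1 (g zv)) inE hz /= -/R; lia.
have hW : #|W| <= m - b.+3 := card_ge Hbm.
have each : forall s, 2 <= #|S s| + #|S s :&: W|.
  move=> s; case: (leqP 2 #|S s|) => [H|H]; first by lia.
  have c0S : g (yv s ord0) \in S s by apply: imset_f.
  have all0 : forall j, g (yv s j) = g (yv s ord0).
    move=> j; move/card_le1_eqP: (H : #|S s| <= 1) => Hle.
    by apply: Hle => //; apply: imset_f.
  have c0W : g (yv s ord0) \in W.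
    rewrite inE leqNgt; apply/negP => Hlt.
    have Hl : (g (yv s ord0) : nat) - 3 < b.
      by move: (hy s ord0) Hlt; lia.
    pose l := Ordinal Hl.
    have Hj : ((g (yv s ord0) : nat) - 3).+1 < b.+1 by rewrite ltnS.
    move: (neq (yv s (Ordinal Hj)) (pv l) (eqxx _)).
    rewrite hpv all0 /=; move: (hy s ord0); lia.
  have : 0 < #|S s :&: W| by apply/card_gt0P; exists (g (yv s ord0)); rewrite inE c0S c0W.
  have : 0 < #|S s| by apply/card_gt0P; exists (g (yv s ord0)).
  lia.
have : \sum_(s : 'I_a.+1) 2 <= \sum_(s : 'I_a.+1) (#|S s| + #|S s :&: W|) by apply: leq_sum.
rewrite big_split sum_nat_const card_ord => H.
have := leq_trans H (leq_add S1 S2) => H'.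
have := leq_trans H' (leq_add hR hW).
lia.
Qed.
End Core.

Theorem theorem7 :
  forall r k : nat, 2 <= r -> 0 < k -> odd (r + k) -> k <= r ->
  forall N : nat, exists (n : nat) (e : rel 'I_n) (P : {set 'I_n}) (d : 'I_n -> 'I_(r + k)),
    N <= n /\
    simple_graph e /\
    chi_le e r /\
    #|DG e P 2| = 3 * (r + k - 1) /\
    precoloring e P d /\
    ~ extendable e P d ((3 * r + k + 1) %/ 2).
Proof.
move=> [|[|a]] k // _ Hk Hodd Hkr N.
have H := odd_double_half (a.+2 + k); rewrite Hodd -muln2 in H.
set β := (a.+2 + k)./2 - 1.
have Hc : a.+2 + k = (2 * β).+3 by rewrite /β; lia.
have Hba : β <= a by lia.
have Hm : (3 * a.+2 + k + 1) %/ 2 = a + β + 4.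
  have -> : 3 * a.+2 + k + 1 = 2 * (a + β + 4) by lia.
  by rewrite mulKn.
rewrite Hm Hc.
have -> : (2 * β).+3 - 1 = (2 * β).+2 by rewrite subn1.
apply: (@transfer _ (@E a (2 * β) N) (@Pset a (2 * β) N) _ (@dV a (2 * β) N)).
- exact: card_V.
- split; [exact: E_sym | exact: E_irr].
- exact: chiV.
- exact: card_DG.
- exact: preV.
- apply: no_ext; lia.
Qed.
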